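(* Let $A$ be a finite alphabet with $|A|\ge 2$ and $k \ge 1$. Let $\mathcal{R}$ be the set of reduced words over $\tilde A$ and $\mathcal{R}_{\le n}$ those of length at most $n$. Let $\mathbb{P}_n$ be the uniform probability law on $\mathcal{R}_{\le n}^k$. Let $T$ be the set of subgroups of $F(A)$ of the form $\langle\vec h\rangle$ with $\vec h \in \mathcal{R}^k$, let $T_n = \{\langle \vec h\rangle \mid \vec h\in \mathcal{R}_{\le n}^k\}$, and let $\mathbb{Q}_n$ be the uniform probability law on $T_n$. Let $X\subseteq T$ and $Y = \{\vec h\in\mathcal{R}^k \mid \langle\vec h\rangle\in X\}$. Then: if $\lim_n\mathbb{P}_n(Y) = 0$, then $\lim_n \mathbb{Q}_n(X) = 0$; if $\mathbb{P}_n(Y) = \mathcal{O}(e^{-cn})$ for some $c>0$, then $\mathbb{Q}_n(X) = \mathcal{O}(e^{-c'n})$ for some $c'>0$. Likewise, if $\lim_n \mathbb{P}_n(Y) = 1$ then $\lim_n\mathbb{Q}_n(X) = 1$, and if $1-\mathbb{P}_n(Y) = \mathcal{O}(e^{-cn})$ for some $c>0$ then $1-\mathbb{Q}_n(X) = \mathcal{O}(e^{-c'n})$ for some $c'>0$.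
   Context: $F(A)$ is the free group on $A$, identified with the set of reduced words over $\tilde A = A\cup\bar A$ ($\bar a$ representing $a^{-1}$); a word is reduced if it has no factor $a\bar a$ or $\bar a a$. For a tuple $\vec h = (h_1,\dots,h_k)$ of elements of $F(A)$, $\langle\vec h\rangle$ is the subgroup generated by $h_1,\dots,h_k$. *)

(* Defs.v *)
From Stdlib Require Import Reals List Lia ClassicalEpsilon.
Import ListNotations.
Set Implicit Arguments.
Open Scope R_scope.

Section FreeGroup.
Variable A : Type.

(* letters of \tilde A = A ∪ \bar A : (a,false) is a, (a,true) is \bar a *)
Definition letter := (A * bool)%type.
Definition inv_letter (x : letter) : letter := (fst x, negb (snd x)).
Definition word := list letter.

Definition reduced (w : word) : Prop :=
  forall u v x y, w = u ++ x :: y :: v -> y <> inv_letter x.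

Definition inv_word (w : word) : word := rev (map inv_letter w).

Inductive cancel_step : word -> word -> Prop :=
  | cancel_intro u v x : cancel_step (u ++ x :: inv_letter x :: v) (u ++ v).

Inductive free_equiv : word -> word -> Prop :=
  | fe_refl w : free_equiv w w
  | fe_step w1 w2 : cancel_step w1 w2 -> free_equiv w1 w2
  | fe_sym w1 w2 : free_equiv w1 w2 -> free_equiv w2 w1
  | fe_trans w1 w2 w3 : free_equiv w1 w2 -> free_equiv w2 w3 -> free_equiv w1 w3.

(* the subgroup <h_1,...,h_k> of F(A), as a set of reduced words:
   reduced forms of products of generators and their inverses *)
Definition gen (h : list word) : word -> Prop :=
  fun w => reduced w /\
    exists s : list (word * bool),
      (forall g, In g s -> In (fst g) h) /\
      free_equiv (concat (map (fun g : word * bool => if snd g then inv_word (fst g) else fst g) s)) w.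

Definition Rk (k : nat) (h : list word) : Prop :=
  length h = k /\ Forall reduced h.
Definition Rk_le (k n : nat) (h : list word) : Prop :=
  length h = k /\ Forall (fun w => reduced w /\ (length w <= n)%nat) h.

Definition Tset (k : nat) (H : word -> Prop) : Prop := exists h, Rk k h /\ H = gen h.
Definition Tn (k n : nat) (H : word -> Prop) : Prop := exists h, Rk_le k n h /\ H = gen h.
End FreeGroup.

(* cardinality of a finite set (0 if infinite) *)
Definition fcard {U : Type} (S : U -> Prop) : nat :=
  epsilon (inhabits 0%nat)
    (fun m => exists l : list U, NoDup l /\ length l = m /\ forall x, In x l <-> S x).

Definition Pn {A : Type} (k n : nat) (Y : list (word A) -> Prop) : R :=
  INR (fcard (fun h => Rk_le k n h /\ Y h)) / INR (fcard (Rk_le (A:=A) k n)).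
Definition Qn {A : Type} (k n : nat) (X : (word A -> Prop) -> Prop) : R :=
  INR (fcard (fun H => Tn k n H /\ X H)) / INR (fcard (Tn (A:=A) k n)).

Definition exp_small (u : nat -> R) : Prop :=
  exists c C : R, 0 < c /\ exists N : nat, forall n, (N <= n)%nat -> Rabs (u n) <= C * exp (- c * INR n).

(* Main.v *)
Require Import Defs.
From Stdlib Require Import Reals Lra Lia List Arith ClassicalEpsilon FunctionalExtensionality PropExtensionality.
Import ListNotations.
Open Scope nat_scope.

Definition decP (P : Prop) : {P} + {~ P} := excluded_middle_informative P.
Definition deceq {U : Type} (x y : U) : {x = y} + {x <> y} := decP (x = y).

Definition enum {U : Type} (S : U -> Prop) (l : list U) : Prop :=
  NoDup l /\ forall x, In x l <-> S x.

Lemma fin_enum {U : Type} (S : U -> Prop) (l : list U) :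
  (forall x, S x -> In x l) -> exists l', enum S l'.
Proof.
  intros H.
  exists (nodup deceq (filter (fun x => if decP (S x) then true else false) l)).
  split. apply NoDup_nodup.
  intros x. rewrite nodup_In, filter_In. destruct (decP (S x)); split; intuition; discriminate.
Qed.

Lemma enum_length {U : Type} (S : U -> Prop) l1 l2 : enum S l1 -> enum S l2 -> length l1 = length l2.
Proof.
  intros [N1 H1] [N2 H2].
  apply Nat.le_antisymm; apply NoDup_incl_length; auto; intros x Hx.
  apply H2, H1, Hx. apply H1, H2, Hx.
Qed.

Lemma fcard_enum {U : Type} (S : U -> Prop) l : enum S l -> fcard S = length l.
Proof.
  intros He. unfold fcard.
  destruct (epsilon_spec (inhabits 0%nat)
    (fun m => exists l : list U, NoDup l /\ length l = m /\ forall x, In x l <-> S x))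
    as [l' [N [E H]]].
  { exists (length l), l. destruct He; auto. }
  rewrite <- E. apply enum_length with S. split; auto. exact He.
Qed.

Lemma card_inj {U V : Type} (S : U -> Prop) (S' : V -> Prop) (f : U -> V) lS lS' :
  enum S lS -> enum S' lS' -> (forall x, S x -> S' (f x)) ->
  (forall x y, S x -> S y -> f x = f y -> x = y) -> (fcard S <= fcard S')%nat.
Proof.
  intros E E' Hm Hi. rewrite (fcard_enum _ _ E), (fcard_enum _ _ E').
  rewrite <- (length_map f lS). destruct E as [N H]. destruct E' as [N' H'].
  apply NoDup_incl_length.
  - apply NoDup_map_NoDup_ForallPairs; auto. intros x y Hx Hy. apply Hi; apply H; auto.
  - intros y Hy. apply in_map_iff in Hy. destruct Hy as [x [<- Hx]]. apply H', Hm, H, Hx.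
Qed.

Lemma card_split {U : Type} (S P : U -> Prop) l : enum S l ->
  fcard S = (fcard (fun x => S x /\ P x) + fcard (fun x => S x /\ ~ P x))%nat.
Proof.
  intros [N H].
  set (f := fun x => if decP (P x) then true else false).
  rewrite (fcard_enum S l) by (split; auto).
  rewrite (fcard_enum _ (filter f l)).
  rewrite (fcard_enum _ (filter (fun x => negb (f x)) l)).
  symmetry; apply filter_length.
  - split. apply NoDup_filter, N. intros x. rewrite filter_In, H. unfold f. destruct (decP (P x)); simpl; intuition; discriminate.
  - split. apply NoDup_filter, N. intros x. rewrite filter_In, H. unfold f. destruct (decP (P x)); simpl; intuition; discriminate.
Qed.

Lemma enum_prod {U V : Type} (S1 : U -> Prop) (S2 : V -> Prop) l1 l2 :
  enum S1 l1 -> enum S2 l2 ->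
  enum (fun p : U * V => S1 (fst p) /\ S2 (snd p)) (list_prod l1 l2).
Proof.
  intros [N1 H1] [N2 H2]. split.
  - clear H1. induction N1 as [|x l1 Hx N1 IH]; simpl. constructor.
    apply NoDup_app; auto.
    + apply NoDup_map_NoDup_ForallPairs; auto. intros a b _ _ E. injection E; auto.
    + intros [y z] Hm Hn. apply in_map_iff in Hm. destruct Hm as [w [E _]]. injection E; intros; subst.
      apply in_prod_iff in Hn. tauto.
  - intros [x y]. rewrite in_prod_iff, H1, H2. simpl. tauto.
Qed.

Lemma fcard_prod {U V : Type} (S1 : U -> Prop) (S2 : V -> Prop) l1 l2 :
  enum S1 l1 -> enum S2 l2 ->
  fcard (fun p : U * V => S1 (fst p) /\ S2 (snd p)) = (fcard S1 * fcard S2)%nat.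
Proof.
  intros E1 E2. rewrite (fcard_enum _ _ (enum_prod _ _ _ _ E1 E2)), (fcard_enum _ _ E1), (fcard_enum _ _ E2).
  apply length_prod.
Qed.

Fixpoint lists_upto {U : Type} (L : list U) (n : nat) : list (list U) :=
  match n with
  | 0 => [[]]
  | S n => [] :: flat_map (fun x => map (cons x) (lists_upto L n)) L
  end.

Lemma lists_upto_spec {U : Type} (L : list U) n (w : list U) :
  (length w <= n)%nat -> (forall x, In x w -> In x L) -> In w (lists_upto L n).
Proof.
  revert w; induction n; intros w Hl Hin; simpl.
  - destruct w; simpl in *; auto; lia.
  - destruct w as [|x w]; [left; auto|right].
    apply in_flat_map. exists x. split. apply Hin; simpl; auto.
    apply in_map. apply IHn. simpl in Hl; lia. intros y Hy; apply Hin; simpl; auto.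
Qed.

Section Fin.
Variable A : Type.
Variable enumA : list A.
Hypothesis HA : forall a : A, In a enumA.

Definition enumL : list (letter A) := flat_map (fun a => [(a,false);(a,true)]) enumA.
Lemma enumL_spec (x : letter A) : In x enumL.
Proof. destruct x as [a b]. apply in_flat_map. exists a. split; auto. destruct b; simpl; auto. Qed.

Lemma words_cover n (w : word A) : (length w <= n)%nat -> In w (lists_upto enumL n).
Proof. intros H. apply lists_upto_spec; auto. intros; apply enumL_spec. Qed.

Lemma Rk_le_cover k n h : Rk_le k n h -> In h (lists_upto (lists_upto enumL n) k).
Proof.
  intros [E F]. apply lists_upto_spec. lia.
  intros w Hw. rewrite Forall_forall in F. apply words_cover, F, Hw.
Qed.

Lemma Rk_le_enum k n (P : list (word A) -> Prop) : exists l, enum (fun h => Rk_le k n h /\ P h) l.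
Proof. eapply fin_enum. intros h [H _]. apply Rk_le_cover, H. Qed.

Lemma Tn_enum k n (P : (word A -> Prop) -> Prop) : exists l, enum (fun H => Tn k n H /\ P H) l.
Proof. apply (fin_enum _ (map (@gen A) (lists_upto (lists_upto enumL n) k))). intros H [[h [Hh E]] _]. subst. apply in_map, Rk_le_cover, Hh. Qed.

Definition Dk (k K : nat) (d : list (word A)) : Prop :=
  length d = k /\ Forall (fun w => (length w <= K)%nat) d.

Lemma Dk_enum k K : exists l, enum (Dk k K) l.
Proof. apply (fin_enum _ (lists_upto (lists_upto enumL K) k)). intros d [E F]. apply lists_upto_spec. unfold word, letter in *. rewrite E; auto.
  intros w Hw. rewrite Forall_forall in F. apply words_cover, F, Hw. Qed.
End Fin.

Set Implicit Arguments.

Section FG.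
Variable A : Type.
Notation letter := (letter A).
Notation word := (word A).
Notation inv := (@inv_letter A).

Lemma inv_inv (x : letter) : inv (inv x) = x.
Proof. destruct x as [a b]; unfold inv_letter; simpl; rewrite Bool.negb_involutive; auto. Qed.
Lemma inv_neq (x : letter) : inv x <> x.
Proof. destruct x as [a b]; unfold inv_letter; simpl; intros E; injection E; destruct b; discriminate. Qed.

Lemma reduced_nil : reduced (A:=A) [].
Proof. intros u v x y E. destruct u; discriminate. Qed.

Lemma reduced_cons (x : letter) (w : word) :
  reduced (x :: w) <-> reduced w /\ (forall y w', w = y :: w' -> y <> inv x).
Proof.
  split.
  - intros H. split.
    + intros u v z y E. apply (H (x :: u) v z y). rewrite E; auto.
    + intros y w' E. apply (H [] w' x y). rewrite E; auto.
  - intros [H1 H2] u v z y E. destruct u as [|c u]; simpl in E; injection E; intros.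
    + subst. apply (H2 y v); auto.
    + subst. apply (H1 u v z y); auto.
Qed.

Lemma reduced_single (x : letter) : reduced [x].
Proof. apply reduced_cons. split. apply reduced_nil. intros; discriminate. Qed.

Definition jok (u v : word) : Prop :=
  forall x y, hd_error (rev u) = Some x -> hd_error v = Some y -> y <> inv x.

Lemma reduced_app (u v : word) : reduced u -> reduced v -> jok u v -> reduced (u ++ v).
Proof.
  induction u as [|x u IH]; intros Hu Hv J; simpl; auto.
  apply reduced_cons in Hu. destruct Hu as [Hu Hx].
  apply reduced_cons. split.
  - apply IH; auto. intros a b Ha Hb. destruct u as [|c u]. discriminate.
    apply J; auto. simpl. simpl in Ha. destruct (rev u); simpl in *; auto.
  - intros y w' E. destruct u as [|c u]; simpl in E.
    + subst v. apply (J x y); auto.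
    + injection E; intros; subst. apply (Hx y u); auto.
Qed.

Lemma reduced_app_l (u v : word) : reduced (u ++ v) -> reduced u.
Proof. intros H a b x y E. apply (H a (b ++ v) x y). rewrite E; simpl. rewrite <- app_assoc; auto. Qed.
Lemma reduced_app_r (u v : word) : reduced (u ++ v) -> reduced v.
Proof. intros H a b x y E. apply (H (u ++ a) b x y). rewrite E, <- app_assoc; auto. Qed.

Definition push (x : letter) (r : word) : word :=
  match r with
  | y :: r' => if deceq y (inv x) then r' else x :: r
  | [] => [x]
  end.
Definition red (w : word) : word := fold_right push [] w.

Lemma push_reduced (x : letter) (r : word) : reduced r -> reduced (push x r).
Proof.
  intros H. destruct r as [|y r]; simpl. apply reduced_single.
  destruct (deceq y (inv x)). apply reduced_cons in H; tauto.
  apply reduced_cons. split; auto. intros z w' E. injection E; intros; subst; auto.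
Qed.

Lemma red_reduced (w : word) : reduced (red w).
Proof. induction w; simpl. apply reduced_nil. apply push_reduced; auto. Qed.

Lemma red_id (w : word) : reduced w -> red w = w.
Proof.
  induction w as [|x w IH]; intros H; simpl; auto.
  apply reduced_cons in H. destruct H as [H1 H2]. rewrite IH by auto.
  destruct w as [|y w]; simpl; auto. destruct (deceq y (inv x)); auto.
  exfalso; apply (H2 y w); auto.
Qed.

Lemma red_app (u v : word) : red (u ++ v) = fold_right push (red v) u.
Proof. unfold red. apply fold_right_app. Qed.

Lemma push_cancel (x : letter) (r : word) : reduced r -> push x (push (inv x) r) = r.
Proof.
  intros H. destruct r as [|y r]; simpl.
  - destruct (deceq (inv x) (inv x)); [|congruence]. auto.
  - rewrite inv_inv. destruct (deceq y x).
    + subst. destruct r as [|z r]; simpl; auto.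
      destruct (deceq z (inv x)); auto. apply reduced_cons in H. destruct H as [_ H].
      exfalso; apply (H z r); auto.
    + simpl. destruct (deceq (inv x) (inv x)); [|congruence]. auto.
Qed.

Lemma red_step (w1 w2 : word) : cancel_step w1 w2 -> red w1 = red w2.
Proof.
  intros []. rewrite !red_app. f_equal. simpl. apply push_cancel, red_reduced.
Qed.

Lemma fe_red (w1 w2 : word) : free_equiv w1 w2 -> red w1 = red w2.
Proof. induction 1; auto. apply red_step; auto. congruence. Qed.

Lemma fe_ctx (u v w1 w2 : word) : free_equiv w1 w2 -> free_equiv (u ++ w1 ++ v) (u ++ w2 ++ v).
Proof.
  induction 1.
  - apply fe_refl.
  - apply fe_step. destruct H.
    replace (u ++ (u0 ++ x :: inv x :: v0) ++ v) with ((u ++ u0) ++ x :: inv x :: (v0 ++ v))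
      by (rewrite <- !app_assoc; auto).
    replace (u ++ (u0 ++ v0) ++ v) with ((u ++ u0) ++ (v0 ++ v)) by (rewrite <- !app_assoc; auto).
    constructor.
  - apply fe_sym; auto.
  - eapply fe_trans; eauto.
Qed.

Lemma fe_to_red (w : word) : free_equiv w (red w).
Proof.
  induction w as [|x w IH]; simpl. apply fe_refl.
  apply fe_trans with (x :: red w).
  - apply (fe_ctx [x] []) in IH. simpl in IH. rewrite !app_nil_r in IH. exact IH.
  - destruct (red w) as [|y r]; simpl. apply fe_refl.
    destruct (deceq y (inv x)). subst. apply fe_step. apply (cancel_intro [] r x). apply fe_refl.
Qed.

Lemma fe_reduced_eq (w1 w2 : word) : free_equiv w1 w2 -> reduced w1 -> reduced w2 -> w1 = w2.
Proof. intros H R1 R2. rewrite <- (red_id R1), <- (red_id R2). apply fe_red; auto. Qed.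

Lemma inv_word_app (u v : word) : inv_word (u ++ v) = inv_word v ++ inv_word u.
Proof. unfold inv_word. rewrite map_app, rev_app_distr. auto. Qed.
Lemma inv_word_cons x (u : word) : inv_word (x :: u) = inv_word u ++ [inv x].
Proof. unfold inv_word. simpl. auto. Qed.
Lemma inv_word_inv (u : word) : inv_word (inv_word u) = u.
Proof. unfold inv_word. rewrite map_rev, rev_involutive, map_map.
  rewrite (map_ext _ (fun x => x)) by apply inv_inv. apply map_id. Qed.
Lemma inv_word_length (u : word) : length (inv_word u) = length u.
Proof. unfold inv_word. rewrite length_rev, length_map. auto. Qed.

Lemma fe_cancel_word (u p v : word) : free_equiv (u ++ p ++ inv_word p ++ v) (u ++ v).
Proof.
  revert u v; induction p as [|x p IH]; intros u v; simpl. apply fe_refl.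
  rewrite inv_word_cons.
  apply fe_trans with (u ++ x :: inv x :: v).
  - specialize (IH (u ++ [x]) (inv x :: v)). rewrite <- !app_assoc in IH. simpl in IH.
    rewrite <- app_assoc. simpl. exact IH.
  - apply fe_step. constructor.
Qed.

Lemma reduced_inv_word (u : word) : reduced u -> reduced (inv_word u).
Proof.
  intros H a b x y E. intros Ey. subst y.
  assert (E2 : u = inv_word b ++ x :: inv x :: inv_word a).
  { rewrite <- (inv_word_inv u), E. rewrite inv_word_app. simpl. rewrite !inv_word_cons.
    rewrite inv_inv. rewrite <- !app_assoc. auto. }
  apply (H (inv_word b) (inv_word a) x (inv x)); auto.
Qed.
End FG.

Set Implicit Arguments.

Section Seq.
Variable A : Type.
Notation letter := (letter A).
Notation word := (word A).
Notation inv := (@inv_letter A).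

Definition fw (g : word * bool) : word := if snd g then inv_word (fst g) else fst g.
Definition FF (s : list (word * bool)) : word := concat (map fw s).

Definition canc (g g' : word * bool) : Prop := fst g' = fst g /\ snd g' = negb (snd g).

Definition spush (g : word * bool) (acc : list (word * bool)) :=
  match acc with
  | g' :: acc' => if decP (canc g g') then acc' else g :: acc
  | [] => [g]
  end.
Definition sred s := fold_right spush [] s.

Fixpoint sok (s : list (word * bool)) : Prop :=
  match s with
  | g :: ((g' :: _) as t) => ~ canc g g' /\ sok t
  | _ => True
  end.

Lemma sred_incl s g : In g (sred s) -> In g s.
Proof.
  induction s as [|x s IH]; simpl; auto.
  unfold spush. destruct (sred s) as [|g' acc] eqn:E.
  - simpl. intros [H|[]]; auto.
  - destruct (decP (canc x g')).
    + intros H. right. apply IH. simpl. auto.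
    + intros [H|H]; auto.
Qed.

Lemma sred_ok s : sok (sred s).
Proof.
  induction s as [|x s IH]; simpl; auto.
  destruct (sred s) as [|g' acc]; simpl; auto.
  destruct (decP (canc x g')).
  - destruct acc; simpl in *; tauto.
  - simpl. split; auto.
Qed.

Lemma fw_canc g g' : canc g g' -> fw g' = inv_word (fw g).
Proof.
  destruct g as [w bo], g' as [w' bo']; unfold canc, fw; simpl; intros [-> ->].
  destruct bo; simpl; auto. rewrite inv_word_inv; auto.
Qed.

Lemma sred_fe s : free_equiv (FF s) (FF (sred s)).
Proof.
  induction s as [|g s IH]; simpl. apply fe_refl.
  unfold FF; simpl. fold (FF s).
  apply fe_trans with (fw g ++ FF (sred s)).
  - pose proof (fe_ctx (fw g) [] IH) as H. rewrite !app_nil_r in H. exact H.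
  - destruct (sred s) as [|g' acc]; simpl. apply fe_refl.
    destruct (decP (canc g g')).
    + unfold FF; simpl. rewrite (fw_canc c). apply (fe_cancel_word [] (fw g) _).
    + apply fe_refl.
Qed.
End Seq.

Section Markers.
Variable A : Type.
Notation letter := (letter A).
Notation word := (word A).
Notation inv := (@inv_letter A).
Variables a0 b0 : A.
Hypothesis Hab : a0 <> b0.
Local Notation a := ((a0, false) : letter).
Local Notation b := ((b0, false) : letter).
Local Notation ia := ((a0, true) : letter).
Local Notation ib := ((b0, true) : letter).

Ltac dl := unfold inv_letter; simpl; let E := fresh in intro E; injection E; intros; (congruence || discriminate).

Lemma reduced_rep (y : letter) d : reduced (repeat y d).
Proof.
  induction d; simpl. apply reduced_nil. apply reduced_cons. split; auto.
  intros z w E. destruct d; simpl in E; try discriminate. injection E; intros; subst.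
  intro E'. symmetry in E'. apply (inv_neq E').
Qed.

Lemma sandwich (x y z : letter) d : y <> inv x -> z <> inv y -> (d = 0 -> z <> inv x) ->
  reduced (x :: repeat y d ++ [z]).
Proof.
  intros H1 H2 H3. apply reduced_cons. split.
  - apply reduced_app. apply reduced_rep. apply reduced_single.
    intros u v Hu Hv. simpl in Hv. injection Hv; intros; subst.
    destruct d; simpl in Hu. discriminate. rewrite rev_repeat in Hu. destruct d; simpl in Hu;
    injection Hu; intros; subst; auto.
  - intros u w E. destruct d; simpl in E; injection E; intros; subst; auto.
Qed.

Definition Xm (i : nat) : word := a :: repeat b i ++ [a].
Definition iXm (i : nat) : word := ia :: repeat ib i ++ [ia].

Lemma inv_rep (y : letter) d : inv_word (repeat y d) = repeat (inv y) d.
Proof. unfold inv_word. rewrite map_repeat, rev_repeat. auto. Qed.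

Lemma inv_Xm i : inv_word (Xm i) = iXm i.
Proof. unfold Xm, iXm. rewrite inv_word_cons, inv_word_app, inv_rep. simpl. auto. Qed.

Lemma Xm_red i : reduced (Xm i).
Proof. apply sandwich; try dl; intros _; dl. Qed.
Lemma iXm_red i : reduced (iXm i).
Proof. apply sandwich; try dl; intros _; dl. Qed.

Definition Mk (bo : bool) i := if bo then iXm i else Xm i.
Definition endl (bo : bool) : letter := if bo then ia else a.

Lemma hd_rev_snoc (l : word) x : hd_error (rev (l ++ [x])) = Some x.
Proof. rewrite rev_app_distr. auto. Qed.

Lemma junction b1 i1 b2 i2 : (i1 = i2 -> b1 = b2) ->
  exists J, free_equiv (Mk b1 i1 ++ Mk b2 i2) J /\ reduced J /\
    hd_error J = Some (endl b1) /\ hd_error (rev J) = Some (endl b2).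
Proof.
  intros Hi. destruct b1, b2; simpl.
  - exists (iXm i1 ++ iXm i2). split. apply fe_refl. split.
    apply reduced_app; try apply iXm_red. intros u v Hu Hv. unfold iXm in Hu.
    rewrite app_comm_cons, hd_rev_snoc in Hu. simpl in Hv. injection Hu; injection Hv; intros; subst. dl.
    split; auto. replace (iXm i1 ++ iXm i2) with ((iXm i1 ++ ia :: repeat ib i2) ++ [ia])
      by (unfold iXm; rewrite <- app_assoc; auto). apply hd_rev_snoc.
  - destruct (Nat.lt_trichotomy i1 i2) as [Hl|[He|Hl]]; [| specialize (Hi He); discriminate |].
    + exists (ia :: repeat b (i2 - i1) ++ [a]). split; [|split; [apply sandwich; try dl|]].
      * assert (E : repeat b i2 = repeat b i1 ++ repeat b (i2 - i1)) by (rewrite <- repeat_app; f_equal; lia).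
        unfold iXm, Xm. rewrite E.
        pose proof (fe_cancel_word [ia] (repeat ib i1 ++ [ia]) (repeat b (i2 - i1) ++ [a])) as H.
        rewrite inv_word_app, inv_rep in H. simpl in H.
        unfold inv_letter in H; simpl in H.
        rewrite <- !app_assoc in H. simpl in H. rewrite <- !app_assoc. simpl. exact H.
      * intros H0; lia.
      * split; auto. rewrite app_comm_cons, hd_rev_snoc. auto.
    + exists (ia :: repeat ib (i1 - i2) ++ [a]). split; [|split; [apply sandwich; try dl|]].
      * assert (E : repeat ib i1 = repeat ib (i1 - i2) ++ repeat ib i2) by (rewrite <- repeat_app; f_equal; lia).
        unfold iXm, Xm. rewrite E.
        pose proof (fe_cancel_word (ia :: repeat ib (i1 - i2)) (repeat ib i2 ++ [ia]) [a]) as H.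
        rewrite inv_word_app, inv_rep in H. simpl in H. unfold inv_letter in H; simpl in H.
        rewrite <- !app_assoc in H. simpl in H. rewrite <- !app_assoc. simpl. exact H.
      * intros H0; lia.
      * split; auto. rewrite app_comm_cons, hd_rev_snoc. auto.
  - destruct (Nat.lt_trichotomy i1 i2) as [Hl|[He|Hl]]; [| specialize (Hi He); discriminate |].
    + exists (a :: repeat ib (i2 - i1) ++ [ia]). split; [|split; [apply sandwich; try dl|]].
      * assert (E : repeat ib i2 = repeat ib i1 ++ repeat ib (i2 - i1)) by (rewrite <- repeat_app; f_equal; lia).
        unfold iXm, Xm. rewrite E.
        pose proof (fe_cancel_word [a] (repeat b i1 ++ [a]) (repeat ib (i2 - i1) ++ [ia])) as H.
        rewrite inv_word_app, inv_rep in H. simpl in H. unfold inv_letter in H; simpl in H.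
        rewrite <- !app_assoc in H. simpl in H. rewrite <- !app_assoc. simpl. exact H.
      * intros H0; lia.
      * split; auto. rewrite app_comm_cons, hd_rev_snoc. auto.
    + exists (a :: repeat b (i1 - i2) ++ [ia]). split; [|split; [apply sandwich; try dl|]].
      * assert (E : repeat b i1 = repeat b (i1 - i2) ++ repeat b i2) by (rewrite <- repeat_app; f_equal; lia).
        unfold iXm, Xm. rewrite E.
        pose proof (fe_cancel_word (a :: repeat b (i1 - i2)) (repeat b i2 ++ [a]) [ia]) as H.
        rewrite inv_word_app, inv_rep in H. simpl in H. unfold inv_letter in H; simpl in H.
        rewrite <- !app_assoc in H. simpl in H. rewrite <- !app_assoc. simpl. exact H.
      * intros H0; lia.
      * split; auto. rewrite app_comm_cons, hd_rev_snoc. auto.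
  - exists (Xm i1 ++ Xm i2). split. apply fe_refl. split.
    apply reduced_app; try apply Xm_red. intros u v Hu Hv. unfold Xm in Hu.
    rewrite app_comm_cons, hd_rev_snoc in Hu. simpl in Hv. injection Hu; injection Hv; intros; subst. dl.
    split; auto. replace (Xm i1 ++ Xm i2) with ((Xm i1 ++ a :: repeat b i2) ++ [a])
      by (unfold Xm; rewrite <- app_assoc; auto). apply hd_rev_snoc.
Qed.
End Markers.

Set Implicit Arguments.

Section Main.
Variable A : Type.
Notation letter := (letter A).
Notation word := (word A).
Notation inv := (@inv_letter A).
Variables a0 b0 : A.
Hypothesis Hab : a0 <> b0.
Local Notation a := ((a0, false) : letter).
Local Notation b := ((b0, false) : letter).
Local Notation ia := ((a0, true) : letter).
Local Notation ib := ((b0, true) : letter).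
Local Notation Xm := (Xm a0 b0).
Local Notation iXm := (iXm a0 b0).
Local Notation Mk := (Mk a0 b0).
Local Notation endl := (endl a0).
Variable Lc : nat.
Hypothesis HLc : 1 <= Lc.

Definition goodcore (c : word) : Prop :=
  reduced c /\ (forall x, hd_error c = Some x -> x <> ia) /\
  (forall x, hd_error (rev c) = Some x -> x <> ia) /\ length c = Lc.

Definition Cc (bo : bool) (c : word) : word := if bo then inv_word c else c.

Lemma hd_inv_word (c : word) : hd_error (inv_word c) = option_map inv (hd_error (rev c)).
Proof. unfold inv_word. rewrite <- map_rev. destruct (rev c); auto. Qed.
Lemma last_inv_word (c : word) : hd_error (rev (inv_word c)) = option_map inv (hd_error c).
Proof. unfold inv_word. rewrite rev_involutive. destruct c; auto. Qed.

Lemma hd_app_ne (u v : word) : u <> [] -> hd_error (u ++ v) = hd_error u.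
Proof. destruct u; simpl; congruence. Qed.
Lemma last_app_ne (u v : word) : v <> [] -> hd_error (rev (u ++ v)) = hd_error (rev v).
Proof. intros H. rewrite rev_app_distr. destruct (rev v) eqn:E; simpl; auto.
  destruct v; simpl in *; [congruence|]. destruct (rev v); discriminate. Qed.

Lemma good_ne c : goodcore c -> c <> [].
Proof. intros (_&_&_&E) ->. simpl in E. lia. Qed.

Lemma Cc_ne bo c : goodcore c -> Cc bo c <> [].
Proof. intros G. pose proof (good_ne G). destruct bo; simpl; auto.
  intros E. apply (f_equal (@length _)) in E. rewrite inv_word_length in E. destruct c; simpl in *; congruence. Qed.

Lemma Cc_length bo c : goodcore c -> length (Cc bo c) = Lc.
Proof. intros (_&_&_&E). destruct bo; simpl; auto. rewrite inv_word_length; auto. Qed.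

Lemma Cc_red bo c : goodcore c -> reduced (Cc bo c).
Proof. intros (R&_). destruct bo; simpl; auto. apply reduced_inv_word; auto. Qed.

Lemma core_head bo c v y : goodcore c -> hd_error (Cc bo c ++ v) = Some y -> y <> inv (endl bo).
Proof.
  intros G H. rewrite hd_app_ne in H by (apply Cc_ne; auto). destruct G as (_&H1&H2&_).
  destruct bo; simpl in *.
  - rewrite hd_inv_word in H. destruct (hd_error (rev c)) eqn:E; simpl in H; [|discriminate].
    injection H; intros; subst. intros E2. apply (H2 l eq_refl). rewrite <- (inv_inv l), E2. auto.
  - intros ->. apply (H1 _ H). auto.
Qed.

Lemma core_last bo c u x : goodcore c -> hd_error (rev (u ++ Cc bo c)) = Some x -> endl bo <> inv x.
Proof.
  intros G H. rewrite last_app_ne in H by (apply Cc_ne; auto). destruct G as (_&H1&H2&_).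
  destruct bo; simpl in *.
  - rewrite last_inv_word in H. destruct (hd_error c) eqn:E; simpl in H; [|discriminate].
    injection H; intros; subst. rewrite inv_inv. intros E2. apply (H1 l eq_refl). auto.
  - intros E2. apply (H2 x H). rewrite <- (inv_inv x), <- E2. auto.
Qed.

Lemma Mk_ne bo i : Mk bo i <> [].
Proof. destruct bo; unfold Mk, Xm, iXm; discriminate. Qed.
Lemma Mk_hd bo i : hd_error (Mk bo i) = Some (endl bo).
Proof. destruct bo; auto. Qed.
Lemma Mk_last bo i : hd_error (rev (Mk bo i)) = Some (endl bo).
Proof. destruct bo; unfold Mk, Xm, iXm; simpl; rewrite rev_app_distr; auto. Qed.
Lemma Mk_red bo i : reduced (Mk bo i).
Proof. destruct bo; simpl. apply iXm_red; auto. apply Xm_red; auto. Qed.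

Lemma fw_shape (g : word * bool) i c : fst g = Xm i ++ c ++ Xm i ->
  fw g = Mk (snd g) i ++ Cc (snd g) c ++ Mk (snd g) i.
Proof.
  destruct g as [w bo]; cbn [fst snd]; intros ->. destruct bo; unfold fw, Cc, Mk; cbn [fst snd].
  - rewrite !inv_word_app, inv_Xm, app_assoc. auto.
  - auto.
Qed.

Lemma fw_red (g : word * bool) i c : fst g = Xm i ++ c ++ Xm i -> goodcore c -> reduced (fw g).
Proof.
  intros E G. rewrite (@fw_shape g i c E).
  apply reduced_app. apply Mk_red. apply reduced_app. apply Cc_red; auto. apply Mk_red.
  - intros x y Hx Hy. rewrite Mk_hd in Hy. injection Hy; intros; subst.
    exact (@core_last _ c [] x G Hx).
  - intros x y Hx Hy. rewrite Mk_last in Hx. injection Hx; intros; subst.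
    apply (@core_head _ _ _ y G Hy).
Qed.

Lemma rep_uniq (x : letter) r r' z z' (u u' : word) :
  repeat x r ++ z :: u = repeat x r' ++ z' :: u' -> z <> x -> z' <> x -> r = r' /\ z = z' /\ u = u'.
Proof.
  revert r'; induction r; intros [|r'] E H1 H2; simpl in E; injection E; intros; subst; auto.
  - congruence.
  - congruence.
  - destruct (IHr r' H H1 H2) as (?&?&?). auto.
Qed.

Lemma Xm_uniq i j (u u' : word) : Xm i ++ u = Xm j ++ u' -> i = j.
Proof.
  unfold Xm. simpl. intros E. injection E. rewrite <- !app_assoc. simpl. intros E2.
  apply rep_uniq in E2. tauto. intros E3; injection E3; auto. intros E3; injection E3; auto.
Qed.

Variable P : list word.
Definition Pgood := forall i, i < length P -> exists c, nth i P [] = Xm i ++ c ++ Xm i /\ goodcore c.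
Hypothesis HP : Pgood.

Lemma idx w : In w P -> exists i c, i < length P /\ w = nth i P [] /\ nth i P [] = Xm i ++ c ++ Xm i /\ goodcore c.
Proof.
  intros H. destruct (In_nth _ _ [] H) as [i [Hi E]]. destruct (HP Hi) as [c [E2 G]].
  exists i, c. auto.
Qed.

Lemma inv_main s : sok s -> (forall g, In g s -> In (fst g) P) -> forall g s', s = g :: s' ->
  exists i c v W, i < length P /\ fst g = nth i P [] /\ nth i P [] = Xm i ++ c ++ Xm i /\ goodcore c /\
    W = Mk (snd g) i ++ Cc (snd g) c ++ v /\ reduced W /\ free_equiv (FF s) W /\
    length s * Lc <= length (Cc (snd g) c ++ v).
Proof.
  induction s as [|g0 s IH]; intros Hok Hin g s' E; [discriminate|].
  injection E; intros; subst g0 s'. clear E.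
  destruct (@idx _ (Hin g (or_introl eq_refl))) as (i0 & c0 & Hi0 & E0 & E0' & G0).
  destruct s as [|g1 s''].
  - exists i0, c0, (Mk (snd g) i0), (fw g).
    split; [auto|]. split; [congruence|]. split; [auto|]. split; [auto|].
    assert (E00 : fst g = Xm i0 ++ c0 ++ Xm i0) by congruence.
    split; [apply (@fw_shape g i0 c0 E00)|]. split; [apply (@fw_red g i0 c0 E00 G0)|]. split.
    + unfold FF; simpl. rewrite app_nil_r. apply fe_refl.
    + rewrite length_app, Cc_length by auto. simpl. lia.
  - destruct Hok as [Hc Hok].
    destruct (IH Hok (fun g' H => Hin g' (or_intror H)) g1 s'' eq_refl)
      as (i & c & v & W & Hi & E1 & E1' & G & EW & RW & FW & LW).
    assert (Hj : i0 = i -> snd g = snd g1).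
    { intros ->. destruct (snd g) eqn:Eb, (snd g1) eqn:Eb1; auto; exfalso; apply Hc; split;
        try congruence; rewrite Eb, Eb1; auto. }
    destruct (junction Hab Hj) as (J & FJ & RJ & HJ & LJ).
    set (bo := snd g) in *. set (bo1 := snd g1) in *.
    exists i0, c0, (J ++ Cc bo1 c ++ v), (Mk bo i0 ++ Cc bo c0 ++ (J ++ Cc bo1 c ++ v)).
    assert (Efw : fw g = Mk bo i0 ++ Cc bo c0 ++ Mk bo i0) by (apply fw_shape; congruence).
    assert (Rg : reduced (fw g)) by (apply (@fw_red g i0 c0); congruence).
    split; [auto|]. split; [congruence|]. split; [auto|]. split; [auto|]. split; [auto|]. split; [|split].
    +
      rewrite app_assoc. rewrite Efw, app_assoc in Rg. apply reduced_app_l in Rg.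
      assert (Rv : reduced (Cc bo1 c ++ v)) by (rewrite EW in RW; apply reduced_app_r in RW; auto).
      apply reduced_app; auto. apply reduced_app; auto.
      * intros x y Hx Hy. rewrite LJ in Hx. injection Hx; intros; subst. apply (@core_head _ _ _ y G Hy).
      * intros x y Hx Hy. rewrite hd_app_ne in Hy. rewrite HJ in Hy. injection Hy; intros; subst.
        apply (@core_last bo c0 (Mk bo i0) x G0 Hx).
        intros ->. discriminate.
    +
      unfold FF. simpl. fold (FF (g1 :: s'')).
      apply fe_trans with (fw g ++ W).
      * pose proof (fe_ctx (fw g) [] FW) as H. rewrite !app_nil_r in H. exact H.
      * rewrite Efw, EW.
        pose proof (fe_ctx (Mk bo i0 ++ Cc bo c0) (Cc bo1 c ++ v) FJ) as H.
        rewrite <- !app_assoc in H. rewrite <- !app_assoc. exact H.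
    + rewrite !length_app, Cc_length by auto. rewrite !length_app in LW.
      simpl. simpl in LW. lia.
Qed.

Lemma gen_small q : gen P q -> length q < 2 * Lc -> hd_error q = Some a ->
  exists i, i < length P /\ q = nth i P [].
Proof.
  intros [Rq [s [Hs Fs]]] Hl Hh.
  assert (F2 : free_equiv (FF (sred s)) q).
  { apply fe_trans with (FF s). apply fe_sym, sred_fe. exact Fs. }
  assert (Hin : forall g, In g (sred s) -> In (fst g) P) by (intros g Hg; apply Hs, sred_incl, Hg).
  destruct (sred s) as [|g [|g1 s'']] eqn:Es.
  - unfold FF in F2. simpl in F2. apply fe_reduced_eq in F2; auto. subst q. discriminate.
    apply reduced_nil.
  - destruct (@idx _ (Hin g (or_introl eq_refl))) as (i & c & Hi & E & E' & G).
    unfold FF in F2; simpl in F2. rewrite app_nil_r in F2.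
    assert (Hq : fw g = q). { apply fe_reduced_eq; auto. apply (@fw_red g i c); congruence. }
    exists i. split; auto. subst q. rewrite (@fw_shape g i c) in Hh by congruence.
    rewrite hd_app_ne in Hh by apply Mk_ne. rewrite Mk_hd in Hh.
    destruct (snd g) eqn:Eb; simpl in Hh. injection Hh; intros; discriminate.
    unfold fw. rewrite Eb. auto.
  - pose proof (sred_ok s) as Ok. rewrite Es in Ok.
    destruct (inv_main Ok Hin eq_refl) as (i & c & v & W & _ & _ & _ & _ & EW & RW & FW & LW).
    assert (W = q). { apply fe_reduced_eq; auto. apply fe_trans with (FF (g :: g1 :: s'')).
      apply fe_sym; auto. auto. }
    subst. rewrite length_app in Hl. simpl in LW. lia.
Qed.
End Main.

Unset Implicit Arguments.

Section Psi.
Variable A : Type.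
Notation letter := (letter A).
Notation word := (word A).
Notation inv := (@inv_letter A).
Variables a0 b0 : A.
Hypothesis Hab : a0 <> b0.
Local Notation a := ((a0, false) : letter).
Local Notation b := ((b0, false) : letter).
Local Notation ia := ((a0, true) : letter).
Local Notation ib := ((b0, true) : letter).
Local Notation Xm := (Xm a0 b0).
Variable N : nat.

Definition b1of (t : word) : letter := if decP (hd_error t = Some ib) then ib else b.
Definition zof (t : word) : letter := if decP (hd_error (rev t) = Some ib) then ib else b.
Definition core (w : word) : word :=
  let t := firstn N w in b1of t :: t ++ zof t :: repeat a (N - length t).

Ltac dl := unfold inv_letter; simpl; let E := fresh in intro E; injection E; intros; (congruence || discriminate).

Lemma core_good (w : word) : reduced w -> goodcore a0 (N + 2) (core w).
Proof.
  intros Rw. assert (Rt : reduced (firstn N w)).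
  { rewrite <- (firstn_skipn N w) in Rw. apply reduced_app_l in Rw. auto. }
  assert (Lt : length (firstn N w) <= N) by (rewrite length_firstn; lia).
  unfold core. set (t := firstn N w) in *.
  assert (Hz : reduced (zof t :: repeat a (N - length t))).
  { apply reduced_cons. split. apply reduced_rep. intros y w' E.
    destruct (N - length t); simpl in E; [discriminate|]. injection E; intros; subst.
    unfold zof. destruct (decP _); dl. }
  split; [|split; [|split]].
  - apply reduced_cons. split.
    + apply reduced_app; auto. intros x y Hx Hy. simpl in Hy. injection Hy; intros; subst.
      unfold zof. destruct (decP _). rewrite e in Hx. injection Hx; intros; subst. dl.
      intros E. apply n. rewrite Hx. rewrite <- (inv_inv x), <- E. auto.
    + intros y w' E. unfold b1of. destruct t as [|x t'].
      * simpl in E. injection E; intros; subst. unfold zof. simpl. destruct (decP _); [discriminate|]. dl.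
      * simpl in E. injection E; intros; subst. destruct (decP _). simpl in e. injection e; intros; subst. dl.
        intros E2. apply n. simpl. rewrite E2. auto.
  - intros x Hx. simpl in Hx. injection Hx; intros; subst. unfold b1of. destruct (decP _); dl.
  - intros x Hx. rewrite app_comm_cons in Hx. rewrite rev_app_distr in Hx. simpl in Hx.
    destruct (N - length t) eqn:E; simpl in Hx.
    + injection Hx; intros; subst. unfold zof; destruct (decP _); dl.
    + rewrite rev_repeat in Hx. destruct n; simpl in Hx; injection Hx; intros; subst; dl.
  - simpl. rewrite length_app. simpl. rewrite repeat_length. lia.
Qed.

Lemma core_inj (w w' : word) : core w = core w' -> firstn N w = firstn N w'.
Proof.
  unfold core. intros E. apply (f_equal (@rev _)) in E. simpl in E.
  rewrite !rev_app_distr in E. simpl in E. rewrite !rev_repeat in E.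
  rewrite <- !app_assoc in E. simpl in E.
  apply rep_uniq in E. destruct E as (_ & _ & E).
  apply app_inj_tail in E. destruct E as [E _]. rewrite <- (rev_involutive (firstn N w)), E, rev_involutive. auto.
  unfold zof; destruct (decP _); dl. unfold zof; destruct (decP _); dl.
Qed.

Fixpoint psi_list (i : nat) (h : list word) : list word :=
  match h with
  | [] => []
  | w :: t => (Xm i ++ core w ++ Xm i) :: psi_list (S i) t
  end.

Lemma psi_length i h : length (psi_list i h) = length h.
Proof. revert i; induction h; simpl; auto. Qed.

Lemma psi_nth i h j : j < length h -> nth j (psi_list i h) [] = Xm (i + j) ++ core (nth j h []) ++ Xm (i + j).
Proof.
  revert i j; induction h as [|w h IH]; intros i j Hj; simpl in *. lia.
  destruct j. rewrite Nat.add_0_r. auto. rewrite IH by lia. rewrite Nat.add_succ_r. auto.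
Qed.
End Psi.

Unset Implicit Arguments.

Lemma fcard_ext {U : Type} (S S' : U -> Prop) : (forall x, S x <-> S' x) -> fcard S = fcard S'.
Proof. intros H. assert (S = S') as ->; auto. extensionality x. apply propositional_extensionality. auto. Qed.

Section Count.
Variable A : Type.
Variable enumA : list A.
Hypothesis HA : forall a : A, In a enumA.
Variables a0 b0 : A.
Hypothesis Hab : a0 <> b0.
Variable k : nat.
Notation word := (word A).

Definition psi (n : nat) (h : list word) := psi_list A a0 b0 (n - (2 * k + 4)) 0 h.

Lemma Rk_nth n (h : list word) j : Rk_le k n h -> reduced (nth j h []) /\ length (nth j h []) <= n.
Proof.
  intros [E F]. destruct (Nat.lt_ge_cases j (length h)).
  - rewrite Forall_forall in F. apply F. apply nth_In; auto.
  - rewrite nth_overflow by auto. split. apply reduced_nil. simpl; lia.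
Qed.

Lemma psi_props n (h : list word) : 2 * k + 4 <= n -> Rk_le k n h ->
  Rk_le k n (psi n h) /\ Pgood a0 b0 (n - (2 * k + 4) + 2) (psi n h).
Proof.
  intros Hn Hh. assert (Lh : length h = k) by apply Hh.
  assert (G : forall j, j < length h -> nth j (psi n h) [] = Xm a0 b0 j ++ core A a0 b0 (n - (2*k+4)) (nth j h []) ++ Xm a0 b0 j
     /\ goodcore a0 (n - (2 * k + 4) + 2) (core A a0 b0 (n - (2*k+4)) (nth j h []))).
  { intros j Hj. unfold psi. rewrite psi_nth by auto. simpl. split; auto.
    apply core_good; auto. apply (Rk_nth n h j Hh). }
  split; [split|].
  - unfold psi. rewrite psi_length. auto.
  - apply Forall_forall. intros w Hw. destruct (In_nth _ _ [] Hw) as [j [Hj Ej]].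
    assert (Hj' : j < length h) by (rewrite <- (psi_length A a0 b0 (n - (2*k+4)) 0 h); exact Hj).
    destruct (G j Hj') as [E1 G1]. 
    assert (Ew : w = nth j (psi n h) []) by (symmetry; exact Ej).
    rewrite Ew, E1. split.
    + apply (@fw_red A a0 b0 (n - (2*k+4) + 2) ltac:(lia) (Xm a0 b0 j ++ core A a0 b0 (n - (2*k+4)) (nth j h []) ++ Xm a0 b0 j, false) j _ eq_refl G1).
    + rewrite !length_app. destruct G1 as (_&_&_&L). rewrite L. unfold Xm. simpl. rewrite length_app, repeat_length. simpl. lia.
  - intros j Hj. assert (Hj' : j < length h) by (rewrite <- (psi_length A a0 b0 (n - (2*k+4)) 0 h); exact Hj).
    exists (core A a0 b0 (n - (2*k+4)) (nth j h [])). apply G; auto.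
Qed.

Lemma gen_self (P : list word) q : In q P -> reduced q -> gen P q.
Proof. intros H R. split; auto. exists [(q, false)]. split.
  intros g [<-|[]]; auto. simpl. rewrite app_nil_r. apply fe_refl. Qed.

Lemma inj_main n (h g : list word) : 4 * k + 5 <= n -> Rk_le k n h -> Rk_le k n g ->
  gen (psi n h) = gen (psi n g) -> map (skipn (n - (2*k+4))) h = map (skipn (n - (2*k+4))) g -> h = g.
Proof.
  intros Hn Hh Hg EG ES. set (N := n - (2*k+4)) in *.
  destruct (psi_props n h ltac:(lia) Hh) as [Rh Gh]. destruct (psi_props n g ltac:(lia) Hg) as [Rg Gg].
  assert (Lh : length h = k) by apply Hh. assert (Lg : length g = k) by apply Hg.
  apply nth_ext with (d := []) (d' := []). congruence.
  intros j Hj.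
  assert (Hjg : j < length g) by congruence.
  set (q := nth j (psi n g) []).
  assert (Eq : q = Xm a0 b0 j ++ core A a0 b0 N (nth j g []) ++ Xm a0 b0 j) by (unfold q, psi; rewrite psi_nth; auto).
  assert (Gq : gen (psi n h) q).
  { rewrite EG. destruct Rg as [E F]. rewrite Forall_forall in F. apply gen_self.
    apply nth_In. unfold psi; rewrite psi_length; auto. apply F. apply nth_In. unfold psi; rewrite psi_length; auto. }
  assert (Lq : length q <= n).
  { destruct Rg as [E F]. rewrite Forall_forall in F. apply F. apply nth_In. unfold psi; rewrite psi_length; auto. }
  destruct (@gen_small A a0 b0 Hab (N + 2) ltac:(lia) _ Gh q Gq ltac:(lia)) as [i [Hi Ei]].
  { rewrite Eq. auto. }
  unfold psi in Ei, Hi. rewrite psi_length in Hi. rewrite psi_nth in Ei by auto. rewrite Nat.add_0_l in Ei. rewrite Eq in Ei.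
  pose proof (Xm_uniq Hab Ei) as Eij. subst i.
  apply app_inv_head in Ei. apply app_inv_tail in Ei. apply core_inj in Ei.
  assert (Es : skipn N (nth j h []) = skipn N (nth j g [])).
  { pose proof (map_nth (skipn N) h [] j) as H1. pose proof (map_nth (skipn N) g [] j) as H2.
    exact (eq_trans (eq_sym H1) (eq_trans (f_equal (fun l => nth j l (skipn N [])) ES) H2)). }
  rewrite <- (firstn_skipn N (nth j h [])), <- (firstn_skipn N (nth j g [])).
  rewrite Es. f_equal. symmetry. exact Ei. all: auto.
Qed.

Lemma count_main n : 4 * k + 5 <= n ->
  fcard (Rk_le (A:=A) k n) <= fcard (Tn (A:=A) k n) * fcard (Dk A k (2 * k + 4)).
Proof.
  intros Hn.
  destruct (Rk_le_enum A enumA HA k n (fun _ => True)) as [l1 E1].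
  destruct (Tn_enum A enumA HA k n (fun _ => True)) as [l2 E2].
  destruct (Dk_enum A enumA HA k (2*k+4)) as [l3 E3].
  rewrite (fcard_ext (Rk_le k n) (fun h => Rk_le k n h /\ True)) by tauto.
  rewrite (fcard_ext (Tn k n) (fun H => Tn k n H /\ True)) by tauto.
  rewrite <- (fcard_prod _ _ _ _ E2 E3).
  apply (card_inj _ _ (fun h => (gen (psi n h), map (skipn (n - (2*k+4))) h)) _ _ E1 (enum_prod _ _ _ _ E2 E3)).
  - intros h [Hh _]. simpl. split. split; auto. exists (psi n h). split; auto. apply psi_props; auto. lia.
    split. rewrite length_map. apply Hh. apply Forall_forall. intros w Hw. apply in_map_iff in Hw.
    destruct Hw as [x [<- Hx]]. rewrite length_skipn. destruct Hh as [_ F]. rewrite Forall_forall in F.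
    destruct (F x Hx). lia.
  - intros h g [Hh _] [Hg _] E. injection E. intros. eapply inj_main; eauto.
Qed.
End Count.

Unset Implicit Arguments.
Section RealPart.
Local Open Scope R_scope.

Lemma abstract_concl (p q : nat -> R) (M : R) (n0 : nat) : 0 < M ->
  (forall n, (n0 <= n)%nat -> 0 <= q n /\ q n <= M * p n /\ 0 <= 1 - q n /\ 1 - q n <= M * (1 - p n)) ->
  (Un_cv p 0 -> Un_cv q 0) /\ (exp_small p -> exp_small q) /\
  (Un_cv p 1 -> Un_cv q 1) /\ (exp_small (fun n => 1 - p n) -> exp_small (fun n => 1 - q n)).
Proof.
  intros HM H. split; [|split; [|split]].
  - intros Hp eps He. destruct (Hp (eps / M)) as [N1 HN1]. apply Rdiv_lt_0_compat; auto.
    exists (max N1 n0). intros n Hn. destruct (H n ltac:(lia)) as (H1&H2&H3&H4).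
    specialize (HN1 n ltac:(lia)). unfold R_dist in *. rewrite Rminus_0_r in *.
    rewrite Rabs_right by lra. pose proof (Rle_abs (p n)).
    assert (M * Rabs (p n) < M * (eps / M)) by (apply Rmult_lt_compat_l; auto).
    replace (M * (eps / M)) with eps in * by (field; lra).
    assert (M * p n <= M * Rabs (p n)) by (apply Rmult_le_compat_l; lra). lra.
  - intros (c & C & Hc & N1 & HN1). exists c, (M * C). split; auto. exists (max N1 n0). intros n Hn.
    destruct (H n ltac:(lia)) as (H1&H2&H3&H4). specialize (HN1 n ltac:(lia)).
    rewrite Rabs_right by lra. pose proof (Rle_abs (p n)).
    assert (M * Rabs (p n) <= M * (C * exp (- c * INR n))) by (apply Rmult_le_compat_l; lra).
    assert (M * p n <= M * Rabs (p n)) by (apply Rmult_le_compat_l; lra). rewrite Rmult_assoc. lra.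
  - intros Hp eps He. destruct (Hp (eps / M)) as [N1 HN1]. apply Rdiv_lt_0_compat; auto.
    exists (max N1 n0). intros n Hn. destruct (H n ltac:(lia)) as (H1&H2&H3&H4).
    specialize (HN1 n ltac:(lia)). unfold R_dist in *.
    rewrite Rabs_left1 by lra. rewrite Rabs_minus_sym in HN1. pose proof (Rle_abs (1 - p n)).
    assert (M * Rabs (1 - p n) < M * (eps / M)) by (apply Rmult_lt_compat_l; auto).
    replace (M * (eps / M)) with eps in * by (field; lra).
    assert (M * (1 - p n) <= M * Rabs (1 - p n)) by (apply Rmult_le_compat_l; lra). lra.
  - intros (c & C & Hc & N1 & HN1). exists c, (M * C). split; auto. exists (max N1 n0). intros n Hn.
    destruct (H n ltac:(lia)) as (H1&H2&H3&H4). specialize (HN1 n ltac:(lia)).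
    rewrite Rabs_right by lra. pose proof (Rle_abs (1 - p n)).
    assert (M * Rabs (1 - p n) <= M * (C * exp (- c * INR n))) by (apply Rmult_le_compat_l; lra).
    assert (M * (1 - p n) <= M * Rabs (1 - p n)) by (apply Rmult_le_compat_l; lra). rewrite Rmult_assoc. lra.
Qed.

Lemma ratio_le (a r b t M : nat) : (0 < r)%nat -> (0 < t)%nat -> (b * r <= M * a * t)%nat ->
  INR b / INR t <= INR M * (INR a / INR r).
Proof.
  intros Hr Ht H. apply lt_0_INR in Hr. apply lt_0_INR in Ht. apply le_INR in H.
  rewrite !mult_INR in H.
  apply (Rmult_le_reg_r (INR t * INR r)). nra.
  replace (INR b / INR t * (INR t * INR r)) with (INR b * INR r) by (field; lra).
  replace (INR M * (INR a / INR r) * (INR t * INR r)) with (INR M * INR a * INR t) by (field; lra).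
  lra.
Qed.

End RealPart.

Unset Implicit Arguments.

Lemma enum_ext {U : Type} (S S' : U -> Prop) l : (forall x, S x <-> S' x) -> enum S l -> enum S' l.
Proof. intros H [N E]. split; auto. intros x. rewrite E. auto. Qed.

Section Fin2.
Variable A : Type.
Variable enumA : list A.
Hypothesis HA : forall a : A, In a enumA.
Variable k : nat.

Lemma enum_Rk n : exists l, enum (Rk_le (A:=A) k n) l.
Proof. destruct (Rk_le_enum A enumA HA k n (fun _ => True)) as [l E]. exists l. eapply enum_ext; [|exact E]. tauto. Qed.
Lemma enum_Tn n : exists l, enum (Tn (A:=A) k n) l.
Proof. destruct (Tn_enum A enumA HA k n (fun _ => True)) as [l E]. exists l. eapply enum_ext; [|exact E]. tauto. Qed.

Lemma Rk_nil n : Rk_le (A:=A) k n (repeat [] k).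
Proof. split. apply repeat_length. apply Forall_forall. intros x Hx. apply repeat_spec in Hx. subst.
  split. apply reduced_nil. simpl. lia. Qed.

Lemma pos_Rk n : (0 < fcard (Rk_le (A:=A) k n))%nat.
Proof. destruct (enum_Rk n) as [l E]. rewrite (fcard_enum _ _ E). destruct E as [_ E].
  assert (In (repeat [] k) l) by (apply E, Rk_nil). destruct l; simpl in *; [tauto|lia]. Qed.
Lemma pos_Tn n : (0 < fcard (Tn (A:=A) k n))%nat.
Proof. destruct (enum_Tn n) as [l E]. rewrite (fcard_enum _ _ E). destruct E as [_ E].
  assert (In (gen (repeat [] k)) l) by (apply E; exists (repeat [] k); split; auto; apply Rk_nil).
  destruct l; simpl in *; [tauto|lia]. Qed.

Lemma tn_le n (Z : (word A -> Prop) -> Prop) :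
  (fcard (fun H => Tn k n H /\ Z H) <= fcard (fun h => Rk_le k n h /\ Z (gen h)))%nat.
Proof.
  destruct (Tn_enum A enumA HA k n Z) as [l1 E1].
  destruct (Rk_le_enum A enumA HA k n (fun h => Z (gen h))) as [l2 E2].
  set (pre := fun H => epsilon (inhabits (@nil (word A))) (fun h => Rk_le k n h /\ H = gen h)).
  assert (Hpre : forall H, Tn k n H -> Rk_le k n (pre H) /\ H = gen (pre H)).
  { intros H [h Hh]. apply (epsilon_spec (inhabits (@nil (word A))) (fun h => Rk_le k n h /\ H = gen h)).
    exists h; auto. }
  apply (card_inj _ _ pre _ _ E1 E2).
  - intros H [HT HZ]. destruct (Hpre H HT) as [R E]. split; auto. rewrite <- E. auto.
  - intros H H' [HT _] [HT' _] E. destruct (Hpre H HT) as [_ E1']. destruct (Hpre H' HT') as [_ E2'].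
    congruence.
Qed.
End Fin2.

Open Scope R_scope.

Theorem mainTheorem4 (A : Type) (enumA : list A)
  (HA_fin : NoDup enumA /\ forall a : A, In a enumA) (HA_card : (2 <= length enumA)%nat)
  (k : nat) (Hk : (1 <= k)%nat)
  (X : (word A -> Prop) -> Prop) (HX : forall H, X H -> Tset k H) :
  let Y := fun h : list (word A) => Rk k h /\ X (gen h) in
  (Un_cv (fun n => Pn k n Y) 0 -> Un_cv (fun n => Qn k n X) 0) /\
  (exp_small (fun n => Pn k n Y) -> exp_small (fun n => Qn k n X)) /\
  (Un_cv (fun n => Pn k n Y) 1 -> Un_cv (fun n => Qn k n X) 1) /\
  (exp_small (fun n => 1 - Pn k n Y) -> exp_small (fun n => 1 - Qn k n X)).
Proof.
  intros Y. destruct HA_fin as [ND HA].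
  destruct enumA as [|a0 [|b0 rest]]; simpl in HA_card; try lia.
  assert (Hab : a0 <> b0) by (intros ->; inversion ND; subst; simpl in *; tauto).
  set (M := fcard (Dk A k (2 * k + 4)%nat)).
  apply (abstract_concl _ _ (INR M + 1) (4 * k + 5)%nat).
  { pose proof (pos_INR M). lra. }
  intros n Hn.
  set (en := a0 :: b0 :: rest) in *.
  pose proof (count_main A en HA a0 b0 Hab k n Hn) as HC. fold M in HC.
  pose proof (pos_Rk A en HA k n) as Pr. pose proof (pos_Tn A en HA k n) as Pt.
  destruct (enum_Rk A en HA k n) as [lr Er]. destruct (enum_Tn A en HA k n) as [lt Et].
  pose proof (card_split (Rk_le k n) (fun h => X (gen h)) _ Er) as Sr.
  pose proof (card_split (Tn k n) X _ Et) as St.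
  pose proof (tn_le A en HA k n X) as L1.
  pose proof (tn_le A en HA k n (fun H => ~ X H)) as L2.
  set (r := fcard (Rk_le (A:=A) k n)) in *. set (t := fcard (Tn (A:=A) k n)) in *.
  set (a := fcard (fun h => Rk_le (A:=A) k n h /\ X (gen h))) in *.
  set (a' := fcard (fun h => Rk_le (A:=A) k n h /\ ~ X (gen h))) in *.
  set (b := fcard (fun H => Tn (A:=A) k n H /\ X H)) in *.
  set (b' := fcard (fun H => Tn (A:=A) k n H /\ ~ X H)) in *.
  assert (EP : Pn k n Y = INR a / INR r).
  { unfold Pn. f_equal. f_equal. apply fcard_ext. intros h. unfold Y. split.
    - intros [H1 [_ H2]]. auto.
    - intros [H1 H2]. split; auto. split; auto. destruct H1 as [E F]. split; auto.
      eapply Forall_impl; [|exact F]. simpl. tauto. }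
  assert (EQ : Qn k n X = INR b / INR t) by reflexivity.
  rewrite EP, EQ.
  assert (Hr : 0 < INR r) by (apply lt_0_INR; lia).
  assert (Ht : 0 < INR t) by (apply lt_0_INR; lia).
  assert (E1P : 1 - INR a / INR r = INR a' / INR r).
  { assert (Hs : INR r = INR a + INR a') by (rewrite Sr; apply plus_INR). rewrite Hs. field. lra. }
  assert (E1Q : 1 - INR b / INR t = INR b' / INR t).
  { assert (Hs : INR t = INR b + INR b') by (rewrite St; apply plus_INR). rewrite Hs. field. lra. }
  rewrite E1P, E1Q.
  assert (R1 : INR b / INR t <= INR M * (INR a / INR r)) by (apply ratio_le; nia).
  assert (R2 : INR b' / INR t <= INR M * (INR a' / INR r)) by (apply ratio_le; nia).
  assert (Pa : 0 <= INR a / INR r) by (unfold Rdiv; apply Rmult_le_pos; [apply pos_INR | apply Rlt_le, Rinv_0_lt_compat; lra]).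
  assert (Pa' : 0 <= INR a' / INR r) by (unfold Rdiv; apply Rmult_le_pos; [apply pos_INR | apply Rlt_le, Rinv_0_lt_compat; lra]).
  assert (Pb : 0 <= INR b / INR t) by (unfold Rdiv; apply Rmult_le_pos; [apply pos_INR | apply Rlt_le, Rinv_0_lt_compat; lra]).
  assert (Pb' : 0 <= INR b' / INR t) by (unfold Rdiv; apply Rmult_le_pos; [apply pos_INR | apply Rlt_le, Rinv_0_lt_compat; lra]).
  repeat split; nra.
Qed.
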